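(* The sequence $(\mathrm{m}(d)^d)_{d\ge 1}$ has an accumulation point in the interval $[1,2]$.
   Context: For an algebraic integer $\alpha$ with conjugates $\alpha_1,\dots,\alpha_d$, $\operatorname{house}(\alpha)=\max_i|\alpha_i|$. $\mathrm{m}(d)$ denotes the minimum of $\operatorname{house}(\alpha)$ over all algebraic integers $\alpha$ of degree $d$ that are not roots of unity. *)

(* Defs.v *)
From Stdlib Require Import Reals QArith Qreals List Lia.
Open Scope R_scope.

Definition C : Type := (R * R)%type.
Definition C0 : C := (0, 0).
Definition C1 : C := (1, 0).
Definition Cadd (z w : C) : C := (fst z + fst w, snd z + snd w).
Definition Cmul (z w : C) : C :=
  (fst z * fst w - snd z * snd w, fst z * snd w + snd z * fst w).
Definition Cnorm (z : C) : R := sqrt (fst z * fst z + snd z * snd z).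
Fixpoint Cpow (z : C) (n : nat) : C :=
  match n with O => C1 | S k => Cmul z (Cpow z k) end.

(* Polynomials with real coefficients, as the list of coefficients
   [a_0; a_1; ...; a_n] (lowest degree first), evaluated at complex points. *)
Fixpoint peval (p : list R) (z : C) : C :=
  match p with
  | nil => C0
  | a :: q => Cadd (a, 0) (Cmul z (peval q z))
  end.
Definition is_root (p : list R) (z : C) : Prop := peval p z = C0.

Definition has_degree (p : list R) (n : nat) : Prop :=
  length p = S n /\ last p 0 <> 0.
Definition monic (p : list R) : Prop := p <> nil /\ last p 0 = 1.

Definition rat_poly (p : list R) : Prop := Forall (fun a => exists q : Q, a = Q2R q) p.
Definition int_poly (p : list R) : Prop := Forall (fun a => exists k : Z, a = IZR k) p.

Definition alg_integer (a : C) : Prop :=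
  exists p, int_poly p /\ monic p /\ is_root p a.

Definition is_minpoly (a : C) (p : list R) : Prop :=
  rat_poly p /\ monic p /\ is_root p a /\
  forall q n m, rat_poly q -> has_degree q n -> is_root q a ->
    has_degree p m -> (m <= n)%nat.

Definition alg_degree (a : C) (d : nat) : Prop :=
  exists p, is_minpoly a p /\ has_degree p d.

Definition conjugate (a b : C) : Prop :=
  exists p, is_minpoly a p /\ is_root p b.

Definition house_is (a : C) (h : R) : Prop :=
  (exists b, conjugate a b /\ Cnorm b = h) /\
  (forall b, conjugate a b -> Cnorm b <= h).

Definition root_of_unity (a : C) : Prop :=
  exists n : nat, (1 <= n)%nat /\ Cpow a n = C1.

Definition is_m (d : nat) (r : R) : Prop :=
  (exists a, alg_integer a /\ alg_degree a d /\ ~ root_of_unity a /\ house_is a r) /\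
  (forall a h, alg_integer a -> alg_degree a d -> ~ root_of_unity a ->
     house_is a h -> r <= h).

Definition accumulation_point (u : nat -> R) (L : R) : Prop :=
  forall eps, 0 < eps -> forall N : nat, exists d : nat,
    (N <= d)%nat /\ (1 <= d)%nat /\ Rabs (u d - L) < eps.

(* Main.v *)
Require Import Defs.
Set Warnings "-notation-overridden -ambiguous-paths -notation-incompatible-prefix".
From Stdlib Require Import Reals QArith Qreals Classical Epsilon Lra Lia.
From HB Require Import structures.
From mathcomp Require Import all_boot all_order all_algebra.
From mathcomp Require Import Rstruct complex zify.
Import Order.TTheory GRing.Theory Num.Theory.
Set Warnings "-notation-overridden -ambiguous-paths".
Local Open Scope ring_scope.

Notation K := (R[i]).
Definition toC (z : Defs.C) : K := Complex (fst z) (snd z).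
Notation emb := (real_complex R).
Definition pK (p : list R) : {poly K} := map_poly emb (Poly p).

Lemma toC_add z w : toC (Cadd z w) = toC z + toC w.
Proof. by case: z => a b; case: w => c d. Qed.
Lemma toC_mul z w : toC (Cmul z w) = toC z * toC w.
Proof. by case: z => a b; case: w => c d. Qed.
Lemma toC_C0 : toC Defs.C0 = 0. Proof. by []. Qed.
Lemma toC_C1 : toC Defs.C1 = 1. Proof. by []. Qed.
Lemma toC_real a : toC (a, R0) = emb a. Proof. by []. Qed.
Lemma toC_inj : injective toC.
Proof. by case=> a b [c d] [-> ->]. Qed.
Lemma toC_surj (x : K) : exists z, toC z = x.
Proof. by case: x => a b; exists (a, b). Qed.

Lemma toC_peval p z : toC (peval p z) = (pK p).[toC z].
Proof.
rewrite /pK map_Poly_id0 ?rmorph0 // horner_Poly.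
elim: p => [|a q IH] //=.
by rewrite toC_add toC_mul IH toC_real mulrC addrC.
Qed.

Lemma is_rootE p z : Defs.is_root p z <-> root (pK p) (toC z).
Proof.
rewrite /Defs.is_root; split=> [H|/eqP H].
  by apply/eqP; rewrite -toC_peval H.
by apply: toC_inj; rewrite toC_peval H.
Qed.

Lemma toC_pow z n : toC (Cpow z n) = toC z ^+ n.
Proof. by elim: n => [|n IH] //=; rewrite toC_mul IH exprS. Qed.

Lemma CnormE z : Cnorm z = Normc.normc (toC z).
Proof. by case: z => a b; rewrite /Cnorm /= RsqrtE !expr2. Qed.
Set Implicit Arguments. Unset Strict Implicit.

Lemma IZR_int (z : Z) : exists k : int, IZR z = k%:~R.
Proof.
case: z => [|p|p]; first by exists 0.
  by exists (Posz (nat_of_pos p)); rewrite IZRposE INRE.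
exists (- Posz (nat_of_pos p)).
have -> : Z.neg p = Z.opp (Z.pos p) by []. rewrite opp_IZR.
by rewrite IZRposE INRE mulrNz.
Qed.

Lemma int_IZR (k : int) : exists z : Z, k%:~R = IZR z :> R.
Proof.
case: k => n.
  by exists (Z.of_nat n); rewrite -INR_IZR_INZ INRE.
exists (Z.opp (Z.of_nat n.+1)); rewrite opp_IZR -INR_IZR_INZ INRE NegzE mulrNz.
by [].
Qed.

Lemma Q2R_rat (q : Q) : exists r : rat, Q2R q = ratr r.
Proof.
case: q => n d; rewrite /Q2R /=.
have [kn ->] := IZR_int n; have [kd ->] := IZR_int (Z.pos d).
exists (kn%:~R / kd%:~R); rewrite rmorphM /= fmorphV /= !ratr_int.
by [].
Qed.

Lemma Q2R_injZ z : Q2R (inject_Z z) = IZR z.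
Proof. by rewrite /Q2R /= Rinv_1 Rmult_1_r. Qed.

Lemma rat_Q2R (r : rat) : exists q : Q, ratr r = Q2R q.
Proof.
have [zn Hn] := int_IZR (numq r); have [zd Hd] := int_IZR (denq r).
have Hd0 : IZR zd <> R0.
  by rewrite -Hd => /eqP; rewrite intr_eq0 (negbTE (denq_neq0 r)).
have Hq : ~ Qeq (inject_Z zd) (Qmake Z0 xH).
  by move=> /Qeq_eqR; rewrite Q2R_injZ => H; apply: Hd0; rewrite H /Q2R /= Rmult_0_l.
exists (Qdiv (inject_Z zn) (inject_Z zd)); rewrite Q2R_div // !Q2R_injZ -Hn -Hd.
by rewrite -{1}[r]divq_num_den rmorphM /= fmorphV /= !ratr_int.
Qed.

Lemma lengthE {T} (l : list T) : List.length l = size l.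
Proof. by elim: l => //= a l ->. Qed.

Lemma lastE (p : list R) d : List.last p d = seq.last d p.
Proof.
case: p => [|a q] //=.
elim: q a => [|b q IH] a //.
by rewrite /= -IH; case: q {IH}.
Qed.

Lemma rat_poly_ex p : rat_poly p -> exists rs : seq rat, p = map ratr rs.
Proof.
elim=> [|x l [q ->] _ [rs ->]]; first by exists [::].
by have [r ->] := Q2R_rat q; exists (r :: rs).
Qed.

Lemma int_poly_ex p : int_poly p -> exists ks : seq int, p = map intr ks.
Proof.
elim=> [|x l [z ->] _ [ks ->]]; first by exists [::].
by have [k ->] := IZR_int z; exists (k :: ks).
Qed.

Definition QR (P : {poly rat}) : {poly R} := map_poly ratr P.
Definition QK (P : {poly rat}) : {poly K} := map_poly emb (QR P).

Lemma size_QR P : size (QR P) = size P. Proof. exact: size_map_poly. Qed.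
Lemma size_QK P : size (QK P) = size P.
Proof. by rewrite /QK size_map_poly size_QR. Qed.

Lemma QR_seq P : polyseq (QR P) = map ratr (polyseq P).
Proof.
have [->|P0] := eqVneq P 0; first by rewrite /QR map_poly0 !polyseq0.
rewrite /QR map_polyE (PolyK (c:=0)) //.
have := last_map (ratr : rat -> R) P 0; rewrite rmorph0 => ->.
by rewrite -nth_last -lead_coefE fmorph_eq0 lead_coef_eq0.
Qed.

Lemma rat_poly_of P : rat_poly (polyseq (QR P)).
Proof.
rewrite QR_seq; elim: (polyseq P) => [|r rs IH] /=; first by constructor.
constructor=> //; have [q ->] := rat_Q2R r; by exists q.
Qed.

Lemma pK_QR P : pK (polyseq (QR P)) = QK P.
Proof. by rewrite /pK polyseqK. Qed.

Lemma rat_poly_QR p : rat_poly p -> exists P, Poly p = QR P.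
Proof.
move=> /rat_poly_ex [rs ->]; exists (Poly rs).
by rewrite /QR map_Poly_id0 ?rmorph0.
Qed.

Definition minP (a : K) (P : {poly rat}) :=
  P != 0 /\ root (QK P) a /\
  forall Q, Q != 0 -> root (QK Q) a -> (size P <= size Q)%N.

Lemma QK_M A B : QK (A * B) = QK A * QK B.
Proof. by rewrite /QK /QR !rmorphM. Qed.
Lemma QK_D A B : QK (A + B) = QK A + QK B.
Proof. by rewrite /QK /QR !rmorphD. Qed.

Lemma minP_dvd a P Q : minP a P -> root (QK Q) a -> P %| Q.
Proof.
move=> [P0 [rP minl]] rQ.
apply/modp_eq0P; apply/eqP; apply: contraT => r0.
have : root (QK (Q %% P)) a.
  move: rQ; rewrite {1}(divp_eq Q P) QK_D QK_M /root hornerD hornerM.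
  by rewrite (eqP rP) mulr0 add0r.
by move=> /(minl _ r0); rewrite leqNgt ltn_modp P0.
Qed.

Lemma minP_uniq a P1 P2 : P1 \is monic -> P2 \is monic ->
  minP a P1 -> minP a P2 -> P1 = P2.
Proof.
move=> m1 m2 h1 h2; have d12 := @minP_dvd a P1 P2 h1 (proj1 (proj2 h2)).
have d21 := @minP_dvd a P2 P1 h2 (proj1 (proj2 h1)).
by apply/eqP; rewrite -eqp_monic // /eqp d12 d21.
Qed.

Lemma last_QR Q : seq.last 0 (polyseq (QR Q)) = ratr (lead_coef Q).
Proof. by rewrite -nth_last -lead_coefE lead_coef_map. Qed.

Lemma has_degree_QR Q : Q != 0 -> has_degree (polyseq (QR Q)) (size Q).-1.
Proof.
move=> Q0; split.
  by rewrite lengthE size_QR prednK // size_poly_gt0.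
by rewrite lastE last_QR; apply/eqP; rewrite fmorph_eq0 lead_coef_eq0.
Qed.

Lemma minpoly_to_minP a p : is_minpoly a p ->
  exists P, P \is monic /\ minP (toC a) P /\ polyseq (QR P) = p.
Proof.
case=> [rp [[pn lp] [rt mn]]].
have [P EP] := rat_poly_QR rp.
have lp' : seq.last 0 p = 1 by rewrite -lastE.
have Pp : polyseq (Poly p) = p by apply: (PolyK (c:=0)); rewrite lp' oner_neq0.
have sp : polyseq (QR P) = p by rewrite -EP Pp.
have mP : P \is monic.
  have H := last_QR P; rewrite sp lp' in H.
  apply/monicP; apply: (fmorph_inj (ratr : {rmorphism rat -> R})).
  by rewrite rmorph1 /= -H.
have P0 : P != 0 by apply: monic_neq0.
exists P; split=> //; split=> //; split=> //; split.
  by rewrite -pK_QR sp; apply/is_rootE.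
move=> Q Q0 rQ.
have := mn (polyseq (QR Q)) (size Q).-1 (size P).-1 (rat_poly_of Q)
  (has_degree_QR Q0).
rewrite -sp in rt; have := is_rootE (polyseq (QR Q)) a; rewrite pK_QR.
move=> [_ H] /(_ (H rQ)); rewrite -sp => /(_ (has_degree_QR P0)).
move/ssrnat.leP => H2.
have hP : (0 < size P)%N by rewrite size_poly_gt0.
have hQ : (0 < size Q)%N by rewrite size_poly_gt0.
lia.
Qed.

Lemma minP_to_minpoly a P : P \is monic -> minP (toC a) P ->
  is_minpoly a (polyseq (QR P)).
Proof.
move=> mP [P0 [rP mn]].
split; first exact: rat_poly_of.
split.
  split; first by case: (has_degree_QR P0) => + _; case: (polyseq (QR P)).
  by rewrite lastE last_QR (monicP mP) rmorph1.
split; first by apply/is_rootE; rewrite pK_QR.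
move=> q n m rq [hq1 hq2] rtq [hp1 _].
have [Q EQ] := rat_poly_QR rq.
have Pq : polyseq (Poly q) = q.
  by apply: (PolyK (c:=0)); apply/eqP; rewrite -lastE.
have sq : polyseq (QR Q) = q by rewrite -EQ Pq.
have sQ : size Q = n.+1 by rewrite -size_QR sq -lengthE.
have Q0 : Q != 0 by rewrite -size_poly_gt0 sQ.
have rQ : root (QK Q) (toC a) by rewrite -pK_QR sq; apply/is_rootE.
have := mn Q Q0 rQ; rewrite sQ -size_QR.
move: hp1; rewrite lengthE => ->.
by move=> /ssrnat.leP; lia.
Qed.

Lemma minpoly_uniq a p1 p2 : is_minpoly a p1 -> is_minpoly a p2 -> p1 = p2.
Proof.
move=> /minpoly_to_minP [P1 [m1 [h1 <-]]] /minpoly_to_minP [P2 [m2 [h2 <-]]].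
by rewrite (minP_uniq m1 m2 h1 h2).
Qed.

Notation nc := (@Normc.normc R).

Lemma nc_ge0 (z : K) : 0 <= nc z.
Proof. by case: z => a b; rewrite /Normc.normc sqrtr_ge0. Qed.

Lemma nc_sub (x y : K) : nc (x - y) <= nc x + nc y.
Proof.
by apply: le_trans (le_normcD (x : Rcomplex R) (- y)) _; rewrite normcN.
Qed.

Lemma coef_prod_bound (rs : seq K) (h : R) : 0 <= h ->
  (forall z, z \in rs -> nc z <= h) ->
  forall k, nc ((\prod_(z <- rs) ('X - z%:P))`_k) <= (1 + h) ^+ size rs.
Proof.
move=> h0; elim: rs => [|z rs IH] Hz k.
  rewrite big_nil coefC; case: (k == 0%N).
    by rewrite expr0 Normc.normc1.
  by rewrite Normc.normc0 expr0 ler01.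
have IH' : _ := IH (fun w hw => Hz w ltac:(by rewrite inE hw orbT)).
have hz : nc z <= h by apply: Hz; rewrite mem_head.
rewrite big_cons mulrBl coefB coefXM coefCM exprS.
apply: le_trans (nc_sub _ _) _.
rewrite mulrDl mul1r lerD //.
  by case: (k == 0%N); [rewrite Normc.normc0 exprn_ge0 // addr_ge0 // ler01|].
rewrite Normc.normcM; apply: ler_pM => //; exact: nc_ge0.
Qed.

Lemma coef0_prod_bound (rs : seq K) (h : R) : 0 <= h ->
  (forall z, z \in rs -> nc z <= h) ->
  nc ((\prod_(z <- rs) ('X - z%:P))`_0) <= h ^+ size rs.
Proof.
move=> h0; elim: rs => [|z rs IH] Hz.
  by rewrite big_nil coefC eqxx expr0 Normc.normc1.
have IH' : _ := IH (fun w hw => Hz w ltac:(by rewrite inE hw orbT)).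
have hz : nc z <= h by apply: Hz; rewrite mem_head.
rewrite big_cons mulrBl coefB coefXM coefCM eqxx exprS sub0r normcN.
rewrite Normc.normcM; apply: ler_pM => //; exact: nc_ge0.
Qed.

Lemma split_QK P : P \is monic -> exists rs : seq K,
  QK P = \prod_(z <- rs) ('X - z%:P) /\ size rs = (size P).-1.
Proof.
move=> mP; have mK : QK P \is monic by rewrite /QK /QR !monic_map.
case: (closed_field_poly_normal (QK P)) => rs E.
rewrite (monicP mK) scale1r in E; exists rs; split=> //.
by rewrite -size_QK E size_prod_XsubC.
Qed.

Lemma QR_int (F : {poly int}) : QR (map_poly intr F) = map_poly intr F.
Proof.
rewrite /QR -map_poly_comp; apply: eq_map_poly => x /=; exact: ratr_int.
Qed.

Lemma intR_seq (F : {poly int}) :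
  polyseq (map_poly intr F : {poly R}) = map intr (polyseq F).
Proof.
have [->|F0] := eqVneq F 0; first by rewrite map_poly0 !polyseq0.
rewrite map_polyE (PolyK (c:=0)) //.
have := last_map (intr : int -> R) F 0; rewrite mulr0z => ->.
by rewrite -nth_last -lead_coefE intr_eq0 lead_coef_eq0.
Qed.

Lemma int_poly_of (F : {poly int}) : int_poly (polyseq (map_poly intr F : {poly R})).
Proof.
rewrite intR_seq; elim: (polyseq F) => [|k ks IH] /=; first by constructor.
constructor=> //; have [z ->] := int_IZR k; by exists z.
Qed.

Lemma minP_int a P : alg_integer a -> P \is monic -> minP (toC a) P ->
  forall i, exists k : int, P`_i = k%:~R.
Proof.
case=> [f [fi [[fn fl] fr]]] mP hP.
have [ks Ef] := int_poly_ex fi.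
pose F : {poly int} := Poly ks.
have lks : seq.last 0 ks = 1.
  have := last_map (intr : int -> R) ks 0; rewrite mulr0z -Ef -lastE fl.
  by move=> /esym H; apply: (@intr_inj R); rewrite H.
have sF : polyseq F = ks by apply: (PolyK (c:=0)); rewrite lks oner_neq0.
have lF : lead_coef F = 1 by rewrite lead_coefE sF nth_last lks.
have rF : root (QK (map_poly intr F)) (toC a).
  rewrite /QK QR_int.
  have -> : map_poly intr F = Poly f :> {poly R} by rewrite Ef map_Poly_id0 // mulr0z.
  exact/is_rootE.
have := minP_dvd hP rF; case/dvdpP_rat_int=> p1 [c c0 EP] [r Er].
have u1 : lead_coef p1 \is a intUnitRing.unitz.
  by apply: (@intUnitRing.unitzPl _ (lead_coef r)); rewrite mulrC -lead_coefM -Er.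
have uu : (lead_coef p1)%:~R * (lead_coef p1)%:~R = 1 :> rat.
  by move: u1; rewrite qualifE => /orP [] /eqP ->.
have lP : c * (lead_coef p1)%:~R = 1.
  by have := monicP mP; rewrite EP lead_coefZ (lead_coef_map_inj (@intr_inj _)).
have Ec : c = (lead_coef p1)%:~R.
  have := congr1 (fun x => x * (lead_coef p1)%:~R) lP.
  by rewrite /= -mulrA uu mulr1 mul1r.
move=> i; exists (lead_coef p1 * p1`_i).
by rewrite EP coefZ coef_map_id0 // Ec intrM.
Qed.

Lemma conj_root a p b : is_minpoly a p -> (conjugate a b <-> Defs.is_root p b).
Proof.
move=> hp; split; first by case=> p' [hp' rb]; rewrite (minpoly_uniq hp hp').
by move=> rb; exists p.
Qed.

Lemma house_uniq a h h' : house_is a h -> house_is a h' -> h = h'.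
Proof.
move=> [[b [cb nb]] hub] [[b' [cb' nb']] hub'].
apply: Rle_antisym; [rewrite -nb; exact: hub' | rewrite -nb'; exact: hub].
Qed.

Lemma house_congr a a' h : (forall b, conjugate a b <-> conjugate a' b) ->
  house_is a h -> house_is a' h.
Proof.
move=> E [[b [cb nb]] hub]; split; first by exists b; split=> //; apply/E.
by move=> b' /E; apply: hub.
Qed.

Definition hv (p : list R) : R :=
  epsilon (inhabits R0) (fun h => exists a, is_minpoly a p /\ house_is a h).

Lemma hv_spec a p h : is_minpoly a p -> house_is a h -> hv p = h.
Proof.
move=> hp hh.
have [a' [hp' hh']] : exists a', is_minpoly a' p /\ house_is a' (hv p).
  by apply: (epsilon_spec (inhabits R0) (fun h => exists a, is_minpoly a p /\ house_is a h)); exists h, a.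
apply: (house_uniq (a := a)) => //; apply: (house_congr (a := a')) hh'.
by move=> b; rewrite (conj_root _ hp) (conj_root _ hp').
Qed.

Lemma conj_rs a p P rs b : is_minpoly a p -> polyseq (QR P) = p ->
  QK P = \prod_(z <- rs) ('X - z%:P) -> (conjugate a b <-> toC b \in rs).
Proof.
move=> hp sp E; rewrite (conj_root _ hp) is_rootE -sp pK_QR E root_prod_XsubC.
by [].
Qed.

Lemma house_rs a p P rs h : is_minpoly a p -> polyseq (QR P) = p ->
  QK P = \prod_(z <- rs) ('X - z%:P) -> house_is a h ->
  (forall z, z \in rs -> nc z <= h) /\ (exists2 z, z \in rs & nc z = h).
Proof.
move=> hp sp E [[b [cb nb]] hub]; split.
  move=> z zr; have [b' Eb'] := toC_surj z.
  have := hub b'; rewrite CnormE Eb' => H; apply/RleP; apply: H.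
  by apply/(conj_rs _ hp sp E); rewrite Eb'.
by exists (toC b); [apply/(conj_rs _ hp sp E) | rewrite -CnormE].
Qed.

Lemma house_rs_conv a p P rs h : is_minpoly a p -> polyseq (QR P) = p ->
  QK P = \prod_(z <- rs) ('X - z%:P) ->
  (forall z, z \in rs -> nc z <= h) -> (exists2 z, z \in rs & nc z = h) ->
  house_is a h.
Proof.
move=> hp sp E H1 [z zr nz]; split.
  have [b Eb] := toC_surj z; exists b; split; last by rewrite CnormE Eb.
  by apply/(conj_rs _ hp sp E); rewrite Eb.
move=> b /(conj_rs _ hp sp E) /H1 H; rewrite CnormE; exact/RleP.
Qed.

Lemma nc_emb (x : R) : nc (emb x) = `|x|.
Proof. by rewrite /Normc.normc /= expr0n /= addr0 sqrtr_sqr. Qed.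

Lemma QK_coef P i : (QK P)`_i = emb (ratr (P`_i)).
Proof. by rewrite /QK /QR !coef_map. Qed.

Lemma coef0_neq0 a P : minP a P -> (2 < size P)%N -> P`_0 != 0.
Proof.
move=> [P0 [rP mn]] s2; apply/negP => /eqP P00.
have : root P 0 by rewrite /root horner_coef0 P00.
rewrite root_factor_theorem subr0 => /dvdpP [q Eq].
have q0 : q != 0 by apply: contraNneq P0 => q0; rewrite Eq q0 mul0r.
have sP : size P = (size q).+1 by rewrite Eq size_mulX.
move: rP; rewrite Eq QK_M /QK /QR !map_polyX /root hornerM hornerX mulf_eq0.
case/orP => [rq | /eqP a0].
  by have := mn q q0 rq; rewrite sP ltnn.
have X0 : ('X : {poly rat}) != 0 by rewrite polyX_eq0.
have : root (QK 'X) a by rewrite /QK /QR !map_polyX /root hornerX a0.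
by move=> /(mn _ X0); rewrite size_polyX => H; lia.
Qed.

Lemma seq_int (s : seq rat) (B : R) :
  (forall i, (i < size s)%N -> exists k : int, s`_i = k%:~R /\ Rle (Rabs (k%:~R)) B) ->
  exists zs : list Z, map ratr s = map IZR zs /\
    List.Forall (fun z => Rle (Rabs (IZR z)) B) zs /\ List.length zs = size s.
Proof.
elim: s => [|a s IH] H; first by exists nil.
have [zs [E1 [E2 E3]]] := IH (fun i hi => H i.+1 hi).
have [k [Ek Bk]] := H 0%N isT; simpl in Ek.
have [z Ez] := int_IZR k.
exists (z :: zs); split; first by rewrite /= E1 -Ez /= Ek ratr_int.
split; last by rewrite /= E3.
by constructor=> //; rewrite -Ez.
Qed.

Lemma Sd_facts d a h : (0 < d)%N -> alg_integer a -> alg_degree a d ->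
  house_is a h ->
  0 <= h /\ ((1 < d)%N -> 1 <= h ^+ d) /\
  exists zs : list Z, is_minpoly a (map IZR zs) /\ List.length zs = d.+1 /\
    List.Forall (fun z => Rle (Rabs (IZR z)) ((1 + h) ^+ d)) zs.
Proof.
move=> d0 ai [p [hp [lp _]]] hh.
have [P [mP [hP sp]]] := minpoly_to_minP hp.
have sP : size P = d.+1 by rewrite -size_QR sp -lengthE lp.
have [rs [E srs]] := split_QK mP.
rewrite sP /= in srs.
have [H1 [z zr nz]] := house_rs hp sp E hh.
have h0 : 0 <= h by rewrite -nz nc_ge0.
have cint := minP_int ai mP hP.
split=> //; split.
  move=> d1; have c0 : P`_0 != 0 by apply: (coef0_neq0 hP); rewrite sP ltnS.
  have := coef0_prod_bound h0 H1; rewrite -E QK_coef nc_emb srs.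
  have [k Ek] := cint 0%N; rewrite Ek ratr_int; apply: le_trans.
  rewrite -intr_norm ler1z -gtz0_ge1 normr_gt0.
  by apply: contraNneq c0 => k0; rewrite Ek k0.
have [zs [E1 [E2 E3]]] : exists zs : list Z, map ratr (polyseq P) = map IZR zs /\
    List.Forall (fun z => Rle (Rabs (IZR z)) ((1 + h) ^+ d)) zs /\ List.length zs = size P.
  apply: seq_int => i _; have [k Ek] := cint i; exists k; split=> //.
  have := coef_prod_bound h0 H1 i; rewrite -E QK_coef nc_emb srs.
  by rewrite Ek ratr_int RabsE => /RleP.
exists zs; split; first by rewrite -E1 -QR_seq sp.
by rewrite E3 sP.
Qed.

Definition XdZ (d : nat) : {poly int} := 'X^d - 2%:P.
Definition Xd2 (d : nat) : {poly rat} := map_poly intr (XdZ d).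
Definition rd (d : nat) : R := Rpower 2 (Rinv (INR d)).

Section Witness.
Variable d : nat.
Hypothesis d0 : (0 < d)%N.

Lemma INRd_pos : Rlt R0 (INR d).
Proof. by apply: lt_0_INR; apply/ssrnat.ltP. Qed.

Lemma rd_pos : Rlt R0 (rd d).
Proof. exact: exp_pos. Qed.

Lemma rd_pow : rd d ^+ d = 2.
Proof.
rewrite -RpowE -Rpower_pow; last exact: rd_pos.
rewrite /rd Rpower_mult Rinv_l; last by apply: not_eq_sym; apply: Rlt_not_eq; exact: INRd_pos.
by rewrite Rpower_1 //; apply: IZR_lt.
Qed.

Lemma rd_gt1 : 1 < rd d.
Proof.
have H : Rlt (Rpower 2 0) (rd d).
  apply: Rpower_lt; first by apply: IZR_lt.
  by apply: Rinv_0_lt_compat; exact: INRd_pos.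
rewrite Rpower_O in H; last by apply: IZR_lt.
by apply/RltP; exact: H.
Qed.

Lemma rd_le2 : rd d <= 2.
Proof.
rewrite -rd_pow; rewrite -{1}[rd d]expr1; apply: ler_weXn2l => //.
exact: ltW rd_gt1.
Qed.

Lemma monic_XdZ : XdZ d \is monic. Proof. exact: monicXnsubC. Qed.
Lemma monic_Xd2 : Xd2 d \is monic.
Proof. by rewrite /Xd2 monic_map // monic_XdZ. Qed.

Lemma size_Xd2 : size (Xd2 d) = d.+1.
Proof.
by rewrite /Xd2 size_map_inj_poly ?size_XnsubC //; apply: intr_inj.
Qed.

Lemma QK_Xd2 : QK (Xd2 d) = 'X^d - 2%:P.
Proof.
by rewrite /QK /Xd2 QR_int /XdZ !rmorphB /= !map_polyXn !map_polyC /= rmorph_int.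
Qed.

Lemma root_Xd2 (z : K) : root (QK (Xd2 d)) z = (z ^+ d == 2).
Proof. by rewrite QK_Xd2 /root !hornerE subr_eq0. Qed.

Lemma irr_Xd2 : irreducible_poly (Xd2 d).
Proof.
apply/irreducible_rat_int; apply: (@eisenstein_crit 2) => //.
- by rewrite /XdZ size_XnsubC //; case: (d) d0.
- by rewrite (monicP monic_XdZ).
- by rewrite /XdZ coefB coefXn coefC; case: (d) d0.
move=> i; rewrite /XdZ size_XnsubC //= => hi.
rewrite coefB coefXn coefC (ltn_eqF hi) sub0r.
by case: (i == 0%N).
Qed.

Lemma ex_minP (a : K) Q : Q != 0 -> root (QK Q) a -> exists M, minP a M.
Proof.
move: {2}(size Q) (leqnn (size Q)) => n; elim: n Q => [|n IH] Q.
  by rewrite leqn0 size_poly_eq0 => /eqP ->; rewrite eqxx.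
move=> sQ Q0 rQ.
case: (classic (exists Q', Q' != 0 /\ root (QK Q') a /\ (size Q' < size Q)%N)).
  case=> Q' [Q'0 [rQ' sQ']]; apply: (IH Q') => //.
  by rewrite -ltnS (leq_trans sQ').
move=> Hn; exists Q; split=> //; split=> // Q' Q'0 rQ'.
rewrite leqNgt; apply/negP => H; apply: Hn; by exists Q'.
Qed.

Lemma minP_Xd2 : minP (emb (rd d)) (Xd2 d).
Proof.
have X0 : Xd2 d != 0 by apply: monic_neq0; exact: monic_Xd2.
have rX : root (QK (Xd2 d)) (emb (rd d)) by rewrite root_Xd2 -rmorphXn rd_pow rmorph_nat.
split=> //; split=> // Q Q0 rQ.
have [M hM] := ex_minP Q0 rQ.
have dM := minP_dvd hM rX.
have [_ Hirr] := irr_Xd2.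
have sM : size M != 1%N.
  apply/negP => /size_poly1P [c c0 Mc]; case: hM => _ [+ _].
  by rewrite Mc /QK /QR !map_polyC /root hornerC !fmorph_eq0 (negbTE c0).
have := Hirr M sM dM => /eqp_size <-.
by case: hM => _ [_]; apply.
Qed.
End Witness.

Lemma ncX (z : K) n : nc (z ^+ n) = nc z ^+ n.
Proof.
elim: n => [|n IH]; first by rewrite !expr0 Normc.normc1.
by rewrite !exprS Normc.normcM IH.
Qed.

Definition alpha (d : nat) : Defs.C := (rd d, R0).

Lemma alpha_facts d : (0 < d)%N ->
  Defs.alg_integer (alpha d) /\ Defs.alg_degree (alpha d) d /\
  ~ Defs.root_of_unity (alpha d) /\ Defs.house_is (alpha d) (rd d).
Proof.
move=> d0.
have hmin : minP (toC (alpha d)) (Xd2 d) by rewrite toC_real; exact: minP_Xd2.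
have hm := minP_to_minpoly (monic_Xd2 d0) hmin.
have X0 : Xd2 d != 0 by apply: monic_neq0; exact: monic_Xd2.
have r0 : 0 <= rd d by apply: ltW; apply/RltP; exact: rd_pos.
have ncr : nc (emb (rd d)) = rd d by rewrite nc_emb ger0_norm.
split.
  exists (polyseq (QR (Xd2 d))); split; first by rewrite /Xd2 QR_int; apply: int_poly_of.
  by case: hm => _ [hmon [hr _]].
split.
  exists (polyseq (QR (Xd2 d))); split=> //.
  by have := has_degree_QR X0; rewrite size_Xd2.
split.
  case=> n [n1 E]; have := congr1 toC E; rewrite toC_pow toC_C1 toC_real.
  move=> /(congr1 nc); rewrite ncX ncr Normc.normc1 => H.
  have := exprn_egt1 n (rd_gt1 d0); rewrite H ltxx => /esym /negbFE /eqP n0.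
  by move: n1; rewrite n0 => /ssrnat.leP.
have [rs [E _]] := split_QK (monic_Xd2 d0).
apply: (house_rs_conv hm (erefl _) E).
  move=> z zr; have : root (QK (Xd2 d)) z by rewrite E root_prod_XsubC.
  rewrite (@root_Xd2 d) => /eqP zd.
  have : nc z ^+ d == rd d ^+ d.
    by rewrite -ncX zd (@rd_pow d d0) -(rmorph_nat emb) nc_emb ger0_norm.
  by rewrite eqrXn2 // ?nc_ge0 // => /eqP ->.
exists (emb (rd d)) => //.
have : root (QK (Xd2 d)) (emb (rd d)) by case: hmin => _ [+ _]; rewrite toC_real.
by rewrite E root_prod_XsubC.
Qed.

Local Close Scope ring_scope.
Local Open Scope R_scope.

Lemma finite_min (l : list R) (T : R -> Prop) :
  (exists x, T x) -> (forall x, T x -> List.In x l) ->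
  exists m, T m /\ forall x, T x -> m <= x.
Proof.
elim: l T => [|a l IH] T [x Tx] Hl; first by case: (Hl x Tx).
case: (classic (exists y, T y /\ y <> a)) => [[y [Ty ya]]|Hn].
  have Hl' : forall z, T z /\ z <> a -> List.In z l.
    move=> z [Tz za]; case: (Hl z Tz) => // az; by case: za.
  have [m' [[Tm' m'a] Hm']] := IH (fun z => T z /\ z <> a) (ex_intro _ y (conj Ty ya)) Hl'.
  case: (classic (T a)) => Ta.
    case: (Rle_dec a m') => am.
      exists a; split=> // z Tz; case: (classic (z = a)) => [->|za]; first exact: Rle_refl.
      by apply: Rle_trans am (Hm' z (conj Tz za)).
    exists m'; split=> // z Tz; case: (classic (z = a)) => [->|za]; first by lra.
    exact: Hm' z (conj Tz za).
  exists m'; split=> // z Tz; case: (classic (z = a)) => [za|za].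
    by rewrite za in Tz.
  exact: Hm' z (conj Tz za).
have Ha : forall z, T z -> z = a.
  by move=> z Tz; apply: NNPP => za; apply: Hn; exists z.
exists a; split; first by rewrite -(Ha x Tx).
by move=> z /Ha ->; apply: Rle_refl.
Qed.

Definition rangeZ (B : nat) : list Z :=
  List.map (fun k => Z.sub (Z.of_nat k) (Z.of_nat B)) (List.seq 0 (2 * B + 1)%nat).

Lemma rangeZ_in B z : Z.le (Z.abs z) (Z.of_nat B) -> List.In z (rangeZ B).
Proof.
move=> H; apply/List.in_map_iff; exists (Z.to_nat (Z.add z (Z.of_nat B))).
split; first lia.
apply/List.in_seq; lia.
Qed.

Fixpoint allL (n B : nat) : list (list Z) :=
  match n with
  | O => cons nil nil
  | S n => List.flat_map (fun z => List.map (cons z) (allL n B)) (rangeZ B)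
  end.

Lemma allL_in B zs : List.Forall (fun z => Z.le (Z.abs z) (Z.of_nat B)) zs ->
  List.In zs (allL (List.length zs) B).
Proof.
elim=> [|z zs0 Hz _ IH] /=; first by left.
apply/List.in_flat_map; exists z; split; first exact: rangeZ_in.
by apply/List.in_map_iff; exists zs0.
Qed.

Definition Sd (d : nat) (h : R) : Prop :=
  exists a, Defs.alg_integer a /\ Defs.alg_degree a d /\
    ~ Defs.root_of_unity a /\ Defs.house_is a h.

Lemma m_ex d : (0 < d)%N -> exists m, is_m d m /\ 0 <= m /\ m <= rd d /\
  ((1 < d)%N -> 1 <= m ^ d).
Proof.
move=> d0.
have [ai [ad [nr hr]]] := alpha_facts d0.
have rpos := rd_pos d.
have [N HN] := INR_unbounded ((1 + rd d) ^ d).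
pose T h := Sd d h /\ h <= rd d.
pose l := List.map (fun zs => hv (List.map IZR zs)) (allL d.+1 N).
have Hl : forall h, T h -> List.In h l.
  move=> h [[a [ai' [ad' [nr' hh]]]] hle].
  have [h0 [_ [zs [hm [lz Fz]]]]] := Sd_facts d0 ai' ad' hh.
  apply/List.in_map_iff; exists zs; split; first exact: hv_spec hm hh.
  rewrite -lz; apply: allL_in.
  apply: List.Forall_impl Fz => z Hz.
  apply: le_IZR; rewrite abs_IZR -INR_IZR_INZ.
  apply: Rle_trans Hz _; rewrite -RpowE; left.
  apply: Rle_lt_trans HN; apply: pow_incr; move/RleP: h0 => h0.
  change (0 <= h) in h0; change (0 <= 1 + h /\ 1 + h <= 1 + rd d); lra.
have TS : T (rd d) by split; [exists (alpha d) | exact: Rle_refl].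
have [m [[Sm mle] Hm]] := finite_min (ex_intro _ (rd d) TS) Hl.
have Ism : is_m d m.
  split; first exact: Sm.
  move=> a h ai' ad' nr' hh; case: (Rle_dec h (rd d)) => hle.
    by apply: Hm; split=> //; exists a.
  lra.
case: Sm => a [ai' [ad' [nr' hh]]].
have [h0 [h1 _]] := Sd_facts d0 ai' ad' hh.
exists m; split=> //; split; first exact/RleP.
split=> // d1; rewrite RpowE; apply/RleP; exact: h1.
Qed.

Local Notation "m <= n" := (Peano.le m n) : nat_scope.

Theorem corollary2 :
  exists m : nat -> R,
    (forall d : nat, (1 <= d)%nat -> is_m d (m d)) /\
    exists L : R, 1 <= L <= 2 /\ accumulation_point (fun d => m d ^ d) L.
Proof.
pose m d := epsilon (inhabits R0) (is_m d).
have is_m_uniq : forall d x y, is_m d x -> is_m d y -> x = y.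
  move=> d x y [[a [ai [ad [nr hx]]]] Hx] [[b [bi [bd [nb hy]]]] Hy].
  by apply: Rle_antisym; [apply: (Hx b y) | apply: (Hy a x)].
have Hm : forall d, (0 < d)%N -> is_m d (m d) /\ 0 <= m d /\ m d <= rd d /\
    ((1 < d)%N -> 1 <= m d ^ d).
  move=> d d0; have [x [hx rest]] := m_ex d0.
  have hm : is_m d (m d) by apply: (epsilon_spec (inhabits R0) (is_m d)); exists x.
  by rewrite (is_m_uniq _ _ _ hm hx).
exists m; split.
  move=> d d1; have d1' : (0 < d)%N by apply/ssrnat.ltP; lia.
  by case: (Hm d d1').
pose u n := m (n + 2)%nat ^ (n + 2).
have Hu : forall n, 1 <= u n <= 2.
  move=> n; have d0 : (0 < n + 2)%N by rewrite addn2.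
  have d1 : (1 < n + 2)%N by rewrite addn2.
  have [_ [m0 [mr m1]]] := Hm _ d0; split; first exact: m1.
  rewrite /u; apply: Rle_trans (pow_incr _ _ _ (conj m0 mr)) _.
  rewrite RpowE (rd_pow d0); by right.
have [L HL] := Bolzano_Weierstrass u (fun c => 1 <= c <= 2) (compact_P3 1 2) Hu.
have Hacc : forall eps, 0 < eps -> forall N, exists p, (N <= p)%coq_nat /\ Rabs (u p - L) < eps.
  move=> eps he N; have [|p [Np Hp]] := HL (disc L (mkposreal eps he)) N.
    by exists (mkposreal eps he) => y.
  by exists p; split.
exists L; split.
  split.
    apply: Rnot_lt_le => H; have [p [_ Hp]] := Hacc (1 - L) ltac:(lra) 0%nat.
    have := Hu p; move: Hp; rewrite /Rabs; case: Rcase_abs => ?; lra.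
  apply: Rnot_lt_le => H; have [p [_ Hp]] := Hacc (L - 2) ltac:(lra) 0%nat.
  have := Hu p; move: Hp; rewrite /Rabs; case: Rcase_abs => ?; lra.
move=> eps he N; have [p [Np Hp]] := Hacc eps he N.
exists (p + 2)%nat; split; first lia.
by split; first lia.
Qed.
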